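(* Let $G$ be a directed graph with real edge weights and no cycle of negative or zero weight, and let $(s_1,t_1),(s_2,t_2)$ be vertex pairs with $t_i$ reachable from $s_i$. Let $k^*$ be the minimum, over all pairs $(Q_1,Q_2)$ with $Q_i$ a shortest $s_i$–$t_i$ path, of the number of common vertices of $Q_1,Q_2$ outside $\{s_1,t_1\}\cap\{s_2,t_2\}$. Let $P_1,P_2$ be shortest paths from $s_1$ to $t_1$ and from $s_2$ to $t_2$ respectively that intersect in exactly $k^*$ internal vertices, and let $(u,v)$ be a concordant pair for $P_1,P_2$. Then the subpaths $P_1[u,v]$ and $P_2[u,v]$ have exactly $\delta(u,v)$ vertices in common, and these common vertices are precisely the $(u,v)$-distance-critical vertices.
   Context: For a path $P$ and vertices $x,y$ on $P$, $x$ precedes $y$ if $x=y$ or $x$ appears before $y$ on $P$; $P[x,y]$ is the subpath from $x$ to $y$. Paths from $x_1$ to $y_1$ and from $x_2$ to $y_2$ are internally vertex-disjoint if they share no vertex outside $\{x_1,y_1\}\cap\{x_2,y_2\}$. A pair $(a,b)$, not contained in $\{x_1,y_1\}\cap\{x_2,y_2\}$, is a concordant pair for paths $P_1$ (from $x_1$ to $y_1$) and $P_2$ (from $x_2$ to $y_2$) if $a$ precedes $b$ on both paths, $P_1[x_1,a]$ and $P_2[x_2,a]$ are internally vertex-disjoint, and $P_1[b,y_1]$ and $P_2[b,y_2]$ are internally vertex-disjoint. A vertex $w$ is $(x,y)$-distance-critical if $w\in\{x,y\}$ or removing $w$ from $G$ increases the distance from $x$ to $y$; $\delta(x,y)$ is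 the number of $(x,y)$-distance-critical vertices (so $\delta(x,x)=1$). *)

(* Defs.v *)
From HB Require Import structures.
From mathcomp Require Import all_boot all_order all_algebra.
From mathcomp Require Import boolp reals.
Set Implicit Arguments. Unset Strict Implicit. Unset Printing Implicit Defensive.
Import Order.TTheory GRing.Theory Num.Theory.
Local Open Scope ring_scope.

Section Graphs.
Variables (R : realType) (V : finType) (e : rel V) (w : V -> V -> R).

Definition is_path (p : seq V) (x y : V) : bool :=
  match p with
  | [::] => false
  | z :: q => [&& z == x, last z q == y, path e z q & uniq p]
  end.

Definition weight (p : seq V) : R :=
  \sum_(xy <- zip p (behead p)) w xy.1 xy.2.

Definition no_nonpos_cycle : Prop :=
  forall (x : V) (q : seq V), uniq (x :: q) -> cycle e (x :: q) ->
    0 < weight (x :: rcons q x).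

Definition shortest (p : seq V) (x y : V) : Prop :=
  is_path p x y /\ forall q, is_path q x y -> weight p <= weight q.

Definition precedes (p : seq V) (x y : V) : bool :=
  [&& x \in p, y \in p & (index x p <= index y p)%N].

Definition subpath (p : seq V) (x y : V) : seq V :=
  take ((index y p - index x p).+1)%N (drop (index x p) p).

Definition int_disjoint (p1 : seq V) (x1 y1 : V) (p2 : seq V) (x2 y2 : V)
  : Prop :=
  forall z, z \in p1 -> z \in p2 -> (z \in [:: x1; y1]) && (z \in [:: x2; y2]).

Definition concordant (p1 : seq V) (x1 y1 : V) (p2 : seq V) (x2 y2 : V)
  (a b : V) : Prop :=
  ~~ [&& a \in [:: x1; y1], a \in [:: x2; y2],
         b \in [:: x1; y1] & b \in [:: x2; y2]] /\
  precedes p1 a b /\ precedes p2 a b /\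
  int_disjoint (subpath p1 x1 a) x1 a (subpath p2 x2 a) x2 a /\
  int_disjoint (subpath p1 b y1) b y1 (subpath p2 b y2) b y2.

(* z is (x,y)-distance-critical: z is x or y, or removing z strictly
   increases the distance from x to y (to +oo if y becomes unreachable) *)
Definition dist_critical (x y z : V) : Prop :=
  z = x \/ z = y \/
  exists q, shortest q x y /\
    forall p, is_path p x y -> z \notin p -> weight q < weight p.

Definition delta (x y : V) : nat := #|[set z | `[< dist_critical x y z >]]|.

Definition n_internal_common (q1 q2 : seq V) (s1 t1 s2 t2 : V) : nat :=
  #|[set z | [&& z \in q1, z \in q2 &
                 ~~ ((z \in [:: s1; t1]) && (z \in [:: s2; t2]))]]|.

End Graphs.

(* Main.v *)
Require Import Defs.
From HB Require Import structures.
From mathcomp Require Import all_boot all_order all_algebra.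
From mathcomp Require Import boolp reals.
From mathcomp Require Import zify.
From mathcomp.algebra_tactics Require Import lra.
Set Implicit Arguments. Unset Strict Implicit. Unset Printing Implicit Defensive.
Import Order.TTheory GRing.Theory Num.Theory.
Local Open Scope ring_scope.

Ltac unify_sizes_to T := do 10 (try match goal with
  | H : context [@size ?T1 ?p] |- _ => assert_fails (constr_eq T1 T);
      change (@size T1 p) with (@size T p) in H
  | |- context [@size ?T1 ?p] => assert_fails (constr_eq T1 T);
      change (@size T1 p) with (@size T p)
  end).
Ltac slia0 := match goal with
  | |- context [@size ?T _] => unify_sizes_to T
  | H : context [@size ?T _] |- _ => unify_sizes_to T
  | _ => idtac end; lia.
Ltac keep_nat := repeat match goal with
 | H : ?T |- _ => lazymatch T with
     | is_true (leq _ _) => fail | is_true (andb _ _) => fail | @eq bool _ _ => fail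
     | is_true (orb _ _) => fail
     | is_true (negb (@eq_op Datatypes_nat__canonical__eqtype_Equality _ _)) => fail
     | @eq nat _ _ => fail | nat => fail | _ => clear H end end.
Ltac slia := keep_nat; first [lia | slia0].

Section Aux.
Variables (R : realType) (V : finType) (e : rel V) (w : V -> V -> R).

Definition sl (p : seq V) (i j : nat) : seq V := take (j - i).+1 (drop i p).

Lemma subpathE p x y : subpath p x y = sl p (index x p) (index y p).
Proof. by []. Qed.

Lemma size_sl p i j : (i <= j < size p)%N -> size (sl p i j) = (j - i).+1.
Proof. move=> /andP[ij jp]; rewrite /sl size_takel ?size_drop; slia. Qed.

Lemma nth_sl x0 p i j k : (k <= j - i)%N -> nth x0 (sl p i j) k = nth x0 p (i + k).
Proof. by move=> kj; rewrite /sl nth_take ?nth_drop //; slia. Qed.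

Lemma sl_nil p i j : (i <= j < size p)%N -> sl p i j != [::].
Proof. by move=> h; rewrite -size_eq0 size_sl. Qed.

Lemma mem_slP x0 p i j y : (i <= j < size p)%N ->
  reflect (exists k, [/\ (i <= k <= j)%N & nth x0 p k = y]) (y \in sl p i j).
Proof.
move=> h; apply: (iffP (nthP x0)).
  case=> k; rewrite size_sl // => kl <-; exists (i + k)%N; rewrite nth_sl; last slia.
  split=> //; slia.
case=> k [kr <-]; exists (k - i)%N; first by rewrite size_sl //; slia.
rewrite nth_sl; last slia. congr nth; slia.
Qed.

Lemma mem_sl_uniq p i j y : (i <= j < size p)%N -> uniq p ->
  (y \in sl p i j) = (y \in p) && (i <= index y p <= j)%N.
Proof.
move=> h up; apply/idP/idP.
  move=> /(mem_slP y y h) [k [kr <-]].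
  have kp : (k < size p)%N by slia.
  by rewrite mem_nth // index_uniq.
move=> /andP[yp ir]; apply/(mem_slP y y h); exists (index y p); split=> //.
by rewrite nth_index.
Qed.

Lemma mem_sl p i j y : y \in sl p i j -> y \in p.
Proof. by move/mem_take/mem_drop. Qed.

Lemma uniq_sl p i j : uniq p -> uniq (sl p i j).
Proof. by move=> u; rewrite /sl take_uniq // drop_uniq. Qed.

Lemma sorted_sl p i j : sorted e p -> sorted e (sl p i j).
Proof. by move=> s; rewrite /sl take_sorted // drop_sorted. Qed.

Lemma head_sl x0 p i j : (i <= j < size p)%N -> head x0 (sl p i j) = nth x0 p i.
Proof. by move=> h; rewrite -nth0 nth_sl ?addn0 //. Qed.

Lemma last_sl x0 p i j : (i <= j < size p)%N -> last x0 (sl p i j) = nth x0 p j.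
Proof.
move=> h; rewrite -nth_last size_sl // nth_sl; last slia.
congr nth; slia.
Qed.

Lemma sl_cat p i j k : (i <= j)%N -> (j <= k < size p)%N ->
  sl p i k = sl p i j ++ behead (sl p j k).
Proof.
move=> ij jk; have x0 : V.
  by case: p jk => [|a p _]; [rewrite andbF | exact a].
apply: (@eq_from_nth _ x0).
  rewrite size_cat size_behead !size_sl //; [slia|slia|slia].
move=> n; rewrite size_sl; last slia.
move=> nl; rewrite nth_sl; last slia.
rewrite nth_cat size_sl; last slia.
case: ifP => c.
  by rewrite nth_sl //; slia.
rewrite nth_behead nth_sl; last slia.
congr nth; slia.
Qed.

Lemma sl_full p : p != [::] -> sl p 0 (size p).-1 = p.
Proof.
case: p => // a p _; rewrite /sl drop0 take_oversize //=; slia.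
Qed.

Lemma sl_sl p a b i j : (a <= b < size p)%N -> (i <= j <= b - a)%N ->
  sl (sl p a b) i j = sl p (a + i) (a + j).
Proof.
move=> ab ij; have x0 : V.
  by case: p ab => [|c p _]; [rewrite andbF | exact c].
apply: (@eq_from_nth _ x0).
  rewrite !size_sl //. all: try slia. all: try (rewrite size_sl //; slia).
move=> n; rewrite size_sl; last by rewrite size_sl //; slia.
move=> nl; rewrite nth_sl; last slia.
rewrite nth_sl; last slia.
rewrite nth_sl; last slia.
congr nth; slia.
Qed.

Definition walk (p : seq V) (x y : V) : bool :=
  [&& p != [::], sorted e p, head x p == x & last x p == y].

Lemma head_def (p : seq V) a b : p != [::] -> head a p = head b p.
Proof. by case: p. Qed.
Lemma last_def (p : seq V) a b : p != [::] -> last a p = last b p.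
Proof. by case: p. Qed.

Lemma is_pathE p x y : is_path e p x y = walk p x y && uniq p.
Proof.
case: p => [|a p] //=; rewrite /walk /=.
by case: (a == x); case: (last a p == y); case: (path e a p); case: (uniq p);
   case: (a \in p).
Qed.

Lemma walk_sl x0 p x y i j : walk p x y -> (i <= j < size p)%N ->
  walk (sl p i j) (nth x0 p i) (nth x0 p j).
Proof.
move=> /and4P[pn sp _ _] h; apply/and4P; split.
- exact: sl_nil.
- exact: sorted_sl.
- by rewrite (head_def _ x0) ?sl_nil // head_sl.
- by rewrite (last_def _ x0) ?sl_nil // last_sl.
Qed.

Lemma walk_nth0 x0 p x y : walk p x y -> nth x0 p 0 = x.
Proof. by case/and4P=> pn _ /eqP hx _; rewrite nth0 (head_def _ x). Qed.

Lemma walk_nthl x0 p x y : walk p x y -> nth x0 p (size p).-1 = y.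
Proof. by case/and4P=> pn _ _ /eqP hy; rewrite nth_last (last_def _ x). Qed.

Lemma walk_size p x y : walk p x y -> (0 < size p)%N.
Proof. by case/and4P; case: p. Qed.

Lemma walk_cat p q x y z : walk p x y -> walk q y z -> walk (p ++ behead q) x z.
Proof.
case: p => [|a p] // /and4P[_ sp /eqP ha /eqP hl].
case: q => [|b q] // /and4P[_ sq /eqP hb /eqP hl2].
rewrite /= in ha hl hb hl2 sp sq *.
apply/and4P; split=> //=.
- by rewrite cat_path sp hl -hb.
- by rewrite ha.
- by rewrite last_cat hl -hb hl2.
Qed.

Lemma mem_cat_behead (p q : seq V) y : y \in p ++ behead q -> (y \in p) || (y \in q).
Proof. by rewrite mem_cat => /orP[->//|/mem_behead ->]; rewrite orbT. Qed.

Local Notation weight := (weight w).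

Lemma weight_cons2 a b p : weight [:: a, b & p] = w a b + weight (b :: p).
Proof. by rewrite /Defs.weight /= big_cons. Qed.

Lemma weight1 a : weight [:: a] = 0.
Proof. by rewrite /Defs.weight /= big_nil. Qed.

Lemma weight_cat (p q : seq V) x0 : p != [::] -> q != [::] -> last x0 p = head x0 q ->
  weight (p ++ behead q) = weight p + weight q.
Proof.
case: q => [|b q] //; case: p => [|a p] // _ _ /=.
elim: p a => [|c p IH] a /=.
  by move=> ->; rewrite weight1 add0r.
move=> hl; rewrite weight_cons2 (IH c hl) weight_cons2 addrA //.
Qed.


Lemma weight_sl3 p i j k : (i <= j)%N -> (j <= k < size p)%N ->
  weight (sl p i k) = weight (sl p i j) + weight (sl p j k).
Proof.
move=> ij jk; have x0 : V.
  by case: p jk => [|c p _]; [rewrite andbF | exact c].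
rewrite (sl_cat ij jk) (weight_cat (x0:=x0)) ?sl_nil //; try slia.
by rewrite last_sl ?head_sl //; slia.
Qed.

Lemma weight_split3 p i j : (i <= j < size p)%N ->
  weight p = weight (sl p 0 i) + weight (sl p i j) + weight (sl p j (size p).-1).
Proof.
move=> h; have pn : p != [::] by case: p h => //; rewrite andbF.
rewrite -{1}(sl_full pn) (@weight_sl3 _ 0 j). 2: slia. 2: set n := size p in h *; slia.
rewrite (@weight_sl3 _ 0 i j) //; slia.
Qed.

Lemma cut_walk x0 p x y i j : walk p x y -> (i <= j < size p)%N ->
  nth x0 p i = nth x0 p j ->
  let p' := sl p 0 i ++ behead (sl p j (size p).-1) in
  [/\ walk p' x y, size p' = (size p - (j - i))%N, {subset p' <= p},
      weight p = weight p' + weight (sl p i j) &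
      walk (sl p i j) (nth x0 p i) (nth x0 p i)].
Proof.
move=> wp h eij p'.
have s0 := walk_size wp.
have w1 : walk (sl p 0 i) x (nth x0 p i).
  by rewrite -{1}(walk_nth0 x0 wp); eapply walk_sl; first exact wp; slia.
have w2 : walk (sl p j (size p).-1) (nth x0 p i) y.
  by rewrite eij -(walk_nthl x0 wp); eapply walk_sl; first exact wp; set n := size p in h s0 *; slia.
split.
- exact: walk_cat w1 w2.
- rewrite size_cat size_behead !size_sl; slia.
- by move=> z /mem_cat_behead /orP[] /mem_sl.
- rewrite (weight_split3 h) (weight_cat (x0:=x0)) ?sl_nil //; try slia.
    by rewrite addrAC.
  by rewrite last_sl ?head_sl //; slia.
- by rewrite {2}eij; eapply walk_sl; first exact wp; slia.
Qed.

Hypothesis hcyc : no_nonpos_cycle e w.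

Lemma closed_walk_pos n c x : (size c <= n)%N -> walk c x x -> (1 < size c)%N ->
  0 < weight c.
Proof.
elim: n c x => [|n IH] c x; first by case: c.
move=> sn wc s1.
case: c wc sn s1 => [|a q] //.
case/lastP: q => [|q' l] //.
move=> wc sn s1.
have ha : a = x by case/and4P: wc => _ _ /eqP.
have hl : l = x by case/and4P: wc => _ _ _ /eqP; rewrite /= last_rcons.
subst a l.
case: (boolP (uniq (x :: q'))) => [u|/(uniqPn x) [i [j [ij js eij]]]].
  apply: hcyc => //; by case/and4P: wc.
have js' : (j < size (x :: rcons q' x))%N by rewrite /= size_rcons /=; rewrite /= in js; slia.
have eij' : nth x (x :: rcons q' x) i = nth x (x :: rcons q' x) j.
  rewrite -rcons_cons !nth_rcons /= ; rewrite /= in js eij.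
  by rewrite ifT ?ifT //; slia.
have hij : (i <= j < size (x :: rcons q' x))%N by apply/andP; split => //; slia.
have [w' sz _ ew wb] := cut_walk wc hij eij'.
rewrite ew; apply: addr_gt0.
  apply: (IH _ x) => //; rewrite sz; rewrite /= size_rcons in sn js' *; rewrite /= in js; slia.
apply: (IH _ (nth x (x :: rcons q' x) i)) => //; rewrite size_sl //; try slia.
rewrite /= size_rcons in sn js' *; rewrite /= in js; slia.
Qed.

Lemma reduce_walk n p x y : (size p <= n)%N -> walk p x y ->
  exists q, [/\ walk q x y, uniq q, {subset q <= p} & weight q <= weight p].
Proof.
elim: n p => [|n IH] p; first by case: p.
move=> sn wp.
case: (boolP (uniq p)) => [u|/(uniqPn x) [i [j [ij js eij]]]].
  by exists p; split.
have hij : (i <= j < size p)%N by apply/andP; split => //; slia.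
have [w' sz sub ew wb] := cut_walk wp hij eij.
have szl : (size (sl p 0 i ++ behead (sl p j (size p).-1)) <= n)%N.
  rewrite sz; set m := size p in sn js hij *; slia.
have [q [wq uq sq lq]] := IH _ szl w'.
exists q; split=> //.
  by move=> z /sq /sub.
rewrite ew (le_trans lq) // lerDl ltW //.
apply: (closed_walk_pos (leqnn _) wb); rewrite size_sl; slia.
Qed.


Lemma walk_cat_weight (x0 : V) p q x y z : walk p x y -> walk q y z ->
  weight (p ++ behead q) = weight p + weight q.
Proof.
move=> wp wq; apply: (weight_cat (x0:=x0)).
- by case/and4P: wp.
- by case/and4P: wq.
case/and4P: wp => pn _ _ /eqP hl; case/and4P: wq => qn _ /eqP hh _.
by rewrite (last_def _ x) // hl (head_def _ y).
Qed.

Lemma size_cat_behead (p q : seq V) : q != [::] ->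
  size (p ++ behead q) = (size p + size q).-1.
Proof. by case: q => // a q _; rewrite size_cat /=; slia. Qed.

Lemma weight_split2 p k : (k < size p)%N ->
  weight p = weight (sl p 0 k) + weight (sl p k (size p).-1).
Proof.
move=> h; have pn : p != [::] by case: p h.
rewrite -{1}(sl_full pn) (@weight_sl3 _ 0 k) //; set n := size p in h *; slia.
Qed.

Lemma is_path_walk p x y : is_path e p x y -> walk p x y /\ uniq p.
Proof. by rewrite is_pathE => /andP. Qed.

Definition geo (x0 : V) (I : seq V) := forall i j S, (i <= j < size I)%N ->
  walk S (nth x0 I i) (nth x0 I j) -> weight (sl I i j) <= weight S.

Lemma shortest_geo x0 P s t : shortest e w P s t -> geo x0 P.
Proof.
case=> pP minP i j S h wS.
have [wP uP] := is_path_walk pP.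
have w1 : walk (sl P 0 i) s (nth x0 P i).
  rewrite -(walk_nth0 x0 wP); eapply walk_sl; first exact wP; set n := size P in h *; slia.
have w3 : walk (sl P j (size P).-1) (nth x0 P j) t.
  rewrite -(walk_nthl x0 wP); eapply walk_sl; first exact wP; set n := size P in h *; slia.
have w23 := walk_cat wS w3.
have w123 := walk_cat w1 w23.
have [q [wq uq _ lq]] := reduce_walk (leqnn _) w123.
have := minP q (ltac:(by rewrite is_pathE wq uq)).
rewrite (walk_cat_weight x0 w1 w23) (walk_cat_weight x0 wS w3) in lq.
rewrite (weight_split3 h) => hh; lra.
Qed.

Lemma geo_sl x0 I a b : geo x0 I -> (a <= b < size I)%N -> geo x0 (sl I a b).
Proof.
move=> g hab i j S h; rewrite size_sl // in h.
rewrite !nth_sl; try (set n := size I in hab h *; slia).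
rewrite sl_sl //.
apply: g; set n := size I in hab h *; slia.
Qed.

Lemma geo_weight x0 I x y S : geo x0 I -> walk I x y -> walk S x y -> weight I <= weight S.
Proof.
move=> g wI wS; have s0 := walk_size wI.
have pn : I != [::] by case/and4P: wI.
rewrite -(sl_full pn).
apply: g; first by set n := size I in s0 *; slia.
by rewrite (walk_nth0 x0 wI) (walk_nthl x0 wI).
Qed.

Lemma X_left x0 P s t iy iu iv S : shortest e w P s t ->
  (iy < iu)%N -> (iu <= iv < size P)%N ->
  walk S (nth x0 P iu) (nth x0 P iv) -> nth x0 P iy \in S ->
  weight S <= weight (sl P iu iv) -> False.
Proof.
move=> sP h1 h2 wS yS lS.
have [pP minP] := sP; have [wP uP] := is_path_walk pP.
case/(nthP x0): yS => k kS ek.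
have S1w : walk (sl S 0 k) (nth x0 P iu) (nth x0 P iy).
  rewrite -(walk_nth0 x0 wS) -ek; eapply walk_sl; first exact wS; slia.
have S2w : walk (sl S k (size S).-1) (nth x0 P iy) (nth x0 P iv).
  by rewrite -(walk_nthl x0 wS) -ek; eapply walk_sl; first exact wS;
     set m := size S in kS *; slia.
have eS := weight_split2 kS.
have w1 : walk (sl P 0 iy) s (nth x0 P iy).
  rewrite -(walk_nth0 x0 wP); eapply walk_sl; first exact wP; set n := size P in h2 *; slia.
have w3 : walk (sl P iv (size P).-1) (nth x0 P iv) t.
  rewrite -(walk_nthl x0 wP); eapply walk_sl; first exact wP; set n := size P in h2 *; slia.
have wC1 : walk (sl P iy iu) (nth x0 P iy) (nth x0 P iu).
  eapply walk_sl; first exact wP; set n := size P in h2 *; slia.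
have wC := walk_cat wC1 S1w.
have pC : 0 < weight (sl P iy iu ++ behead (sl S 0 k)).
  apply: (closed_walk_pos (leqnn _) wC).
  rewrite size_cat_behead; last by case/and4P: S1w.
  rewrite !size_sl; slia.
rewrite (walk_cat_weight x0 wC1 S1w) in pC.
have w23 := walk_cat S2w w3.
have w123 := walk_cat w1 w23.
have [q [wq uq _ lq]] := reduce_walk (leqnn _) w123.
have := minP q (ltac:(by rewrite is_pathE wq uq)).
rewrite (walk_cat_weight x0 w1 w23) (walk_cat_weight x0 S2w w3) in lq.
have h3 : (iy <= iv < size P)%N by set n := size P in h2 *; slia.
rewrite (weight_split3 h3) (@weight_sl3 P iy iu iv) //; last slia.
move=> hh; lra.
Qed.

Lemma X_right x0 P s t iy iu iv S : shortest e w P s t ->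
  (iu <= iv)%N -> (iv < iy < size P)%N ->
  walk S (nth x0 P iu) (nth x0 P iv) -> nth x0 P iy \in S ->
  weight S <= weight (sl P iu iv) -> False.
Proof.
move=> sP h1 h2 wS yS lS.
have [pP minP] := sP; have [wP uP] := is_path_walk pP.
case/(nthP x0): yS => k kS ek.
have S1w : walk (sl S 0 k) (nth x0 P iu) (nth x0 P iy).
  by rewrite -(walk_nth0 x0 wS) -ek; eapply walk_sl; first exact wS; slia.
have S2w : walk (sl S k (size S).-1) (nth x0 P iy) (nth x0 P iv).
  by rewrite -(walk_nthl x0 wS) -ek; eapply walk_sl; first exact wS;
     set m := size S in kS *; slia.
have eS := weight_split2 kS.
have w1 : walk (sl P 0 iu) s (nth x0 P iu).
  rewrite -(walk_nth0 x0 wP); eapply walk_sl; first exact wP; set n := size P in h2 *; slia.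
have w3 : walk (sl P iy (size P).-1) (nth x0 P iy) t.
  rewrite -(walk_nthl x0 wP); eapply walk_sl; first exact wP; set n := size P in h2 *; slia.
have wC1 : walk (sl P iv iy) (nth x0 P iv) (nth x0 P iy).
  eapply walk_sl; first exact wP; set n := size P in h2 *; slia.
have wC := walk_cat S2w wC1.
have pC : 0 < weight (sl S k (size S).-1 ++ behead (sl P iv iy)).
  apply: (closed_walk_pos (leqnn _) wC).
  rewrite size_cat_behead; last by case/and4P: wC1.
  rewrite !size_sl; slia.
rewrite (walk_cat_weight x0 S2w wC1) in pC.
have w23 := walk_cat S1w w3.
have w123 := walk_cat w1 w23.
have [q [wq uq _ lq]] := reduce_walk (leqnn _) w123.
have := minP q (ltac:(by rewrite is_pathE wq uq)).
rewrite (walk_cat_weight x0 w1 w23) (walk_cat_weight x0 S1w w3) in lq.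
have h3 : (iu <= iv < size P)%N by set n := size P in h2 *; slia.
rewrite (weight_split3 h3) (@weight_sl3 P iv iy (size P).-1); last (set n := size P in h2 *; slia); last slia.
move=> hh; lra.
Qed.


Lemma walk_slx x0 p x y i j a b : walk p x y -> (i <= j < size p)%N ->
  nth x0 p i = a -> nth x0 p j = b -> walk (sl p i j) a b.
Proof. by move=> wp h <- <-; apply: walk_sl wp h. Qed.

Lemma geo_app x0 I i j S a b : geo x0 I -> (i <= j < size I)%N ->
  nth x0 I i = a -> nth x0 I j = b -> walk S a b -> weight (sl I i j) <= weight S.
Proof. by move=> g h <- <-; apply: g. Qed.

Lemma idxP x0 (s : seq V) y : y \in s ->
  exists2 i, (i < size s)%N & nth x0 s i = y /\ index y s = i.
Proof. by move=> ys; exists (index y s); rewrite ?index_mem ?nth_index. Qed.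

Lemma neq_idx (s : seq V) y z : (index y s != index z s) -> y != z.
Proof. by apply: contra => /eqP ->. Qed.

Definition good (I1 I2 Rp : seq V) (z u v : V) (J1 J2 : seq V) : Prop :=
  [/\ walk J1 u v, walk J2 u v, weight J1 <= weight I1, weight J2 <= weight I2 &
  [/\ (forall y, y \in J1 -> [|| y \in I1, y \in I2 | y \in Rp]),
      (forall y, y \in J2 -> [|| y \in I1, y \in I2 | y \in Rp]) &
      (forall y, y \in J1 -> y \in J2 -> [&& y \in I1, y \in I2 & y != z])]].

Lemma good_sym I1 I2 Rp z u v J1 J2 : good I1 I2 Rp z u v J1 J2 -> good I2 I1 Rp z u v J2 J1.
Proof.
case=> h1 h2 h3 h4 [h5 h6 h7]; split=> //; split.
- by move=> y /h6; case: (y \in I1); case: (y \in I2).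
- by move=> y /h5; case: (y \in I1); case: (y \in I2).
- by move=> y a b; have := h7 y b a; case: (y \in I1); case: (y \in I2).
Qed.

Lemma inner_same x0 I1 I2 Rp u v z ia jb a b :
  walk I1 u v -> uniq I1 -> geo x0 I1 -> walk I2 u v ->
  walk Rp u v -> weight Rp <= weight I1 ->
  (ia < jb < size Rp)%N -> nth x0 Rp ia = a -> nth x0 Rp jb = b ->
  a \in I1 -> (index a I1 < index z I1)%N ->
  b \in I1 -> (index z I1 < index b I1)%N ->
  (forall k, (ia < k < jb)%N -> nth x0 Rp k \notin I2) ->
  exists J1 J2, good I1 I2 Rp z u v J1 J2.
Proof.
move=> wI1 uI1 gI1 wI2 wR lR hk ea eb aI ai bI bi mid.
have [i1 i1s [e1 Ei1]] := idxP x0 aI.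
have [j1 j1s [f1 Ej1]] := idxP x0 bI.
rewrite Ei1 in ai; rewrite Ej1 in bi.
have sR := walk_size wR.
have sI := walk_size wI1.
have wA : walk (sl I1 0 i1) u a.
  by apply: (walk_slx (x0:=x0) wI1) => //; first [exact: walk_nth0 wI1 | slia].
have wB : walk (sl Rp ia jb) a b by apply: (walk_slx (x0:=x0) wR) => //; slia.
have wC : walk (sl I1 j1 (size I1).-1) b v.
  by apply: (walk_slx (x0:=x0) wI1) => //; first [exact: walk_nthl wI1 | slia].
have wBC := walk_cat wB wC.
exists (sl I1 0 i1 ++ behead (sl Rp ia jb ++ behead (sl I1 j1 (size I1).-1))), I2.
split; last split.
- exact: walk_cat wA wBC.
- exact: wI2.
- rewrite (walk_cat_weight x0 wA wBC) (walk_cat_weight x0 wB wC).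
  have h1 : weight (sl I1 0 i1) <= weight (sl Rp 0 ia).
    apply: (geo_app (a:=u) (b:=a) gI1) => //; first [exact: walk_nth0 wI1 | slia | idtac].
    by apply: (walk_slx (x0:=x0) wR) => //; first [exact: walk_nth0 wR | slia].
  have h2 : weight (sl I1 j1 (size I1).-1) <= weight (sl Rp jb (size Rp).-1).
    apply: (geo_app (a:=b) (b:=v) gI1) => //; first [exact: walk_nthl wI1 | slia | idtac].
    by apply: (walk_slx (x0:=x0) wR) => //; first [exact: walk_nthl wR | slia].
  have h3 : (ia <= jb < size Rp)%N by slia.
  move: lR; rewrite (weight_split3 h3) => lR; lra.
- exact: lexx.
- move=> y /mem_cat_behead /orP[/mem_sl ->//|/mem_cat_behead /orP[/mem_sl ->|/mem_sl ->]];
  by rewrite ?orbT.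
- by move=> y ->; rewrite /= orbT.
move=> y /mem_cat_behead /orP[|/mem_cat_behead /orP[]].
- rewrite mem_sl_uniq //; [idtac | slia ..].
  case/andP=> yI yr yI2; rewrite yI yI2 /=; apply: (neq_idx (s:=I1)); apply/eqP; slia.
- case/(mem_slP x0); first slia.
  move=> k [kr <-] kI2.
  case: (eqVneq k ia) => [ek|kia]; last case: (eqVneq k jb) => [ek|kjb].
  + subst k; rewrite ea in kI2 *; rewrite aI kI2 /=; apply: (neq_idx (s:=I1)); rewrite Ei1; apply/eqP; slia.
  + subst k; rewrite eb in kI2 *; rewrite bI kI2 /=; apply: (neq_idx (s:=I1)); rewrite Ej1; apply/eqP; slia.
  + have : (ia < k < jb)%N by slia.
    by move=> /mid; rewrite kI2.
- rewrite mem_sl_uniq //; [idtac | slia ..].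
  case/andP=> yI yr yI2; rewrite yI yI2 /=; apply: (neq_idx (s:=I1)); apply/eqP; slia.
Qed.


Lemma inner_cross x0 I1 I2 Rp u v z ia jb a b :
  walk I1 u v -> uniq I1 -> geo x0 I1 -> walk I2 u v -> uniq I2 -> geo x0 I2 ->
  walk Rp u v -> weight Rp <= weight I1 ->
  z \in I1 -> z \in I2 ->
  (ia < jb < size Rp)%N -> nth x0 Rp ia = a -> nth x0 Rp jb = b ->
  a \in I1 -> (index a I1 < index z I1)%N ->
  b \in I2 -> (index z I2 < index b I2)%N ->
  (forall k, (ia < k < jb)%N -> (nth x0 Rp k \notin I1) && (nth x0 Rp k \notin I2)) ->
  exists J1 J2, good I1 I2 Rp z u v J1 J2.
Proof.
move=> wI1 uI1 gI1 wI2 uI2 gI2 wR lR zI1 zI2 hk ea eb aI ai bI bi mid.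
have [i1 i1s [e1 Ei1]] := idxP x0 aI.
have [j2 j2s [f2 Ej2]] := idxP x0 bI.
have [z1 z1s [g1 Ez1]] := idxP x0 zI1.
have [z2 z2s [g2 Ez2]] := idxP x0 zI2.
rewrite Ei1 Ez1 in ai; rewrite Ej2 Ez2 in bi.
have sR := walk_size wR.
have sI := walk_size wI1.
have sI2 := walk_size wI2.
have wA : walk (sl I1 0 i1) u a.
  by apply: (walk_slx (x0:=x0) wI1) => //; first [exact: walk_nth0 wI1 | slia].
have wB : walk (sl Rp ia jb) a b by apply: (walk_slx (x0:=x0) wR) => //; slia.
have wC : walk (sl I2 j2 (size I2).-1) b v.
  by apply: (walk_slx (x0:=x0) wI2) => //; first [exact: walk_nthl wI2 | slia].
have wD : walk (sl I2 0 z2) u z.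
  by apply: (walk_slx (x0:=x0) wI2) => //; first [exact: walk_nth0 wI2 | slia].
have wE : walk (sl I1 z1 (size I1).-1) z v.
  by apply: (walk_slx (x0:=x0) wI1) => //; first [exact: walk_nthl wI1 | slia].
have wBC := walk_cat wB wC.
exists (sl I1 0 i1 ++ behead (sl Rp ia jb ++ behead (sl I2 j2 (size I2).-1))),
       (sl I2 0 z2 ++ behead (sl I1 z1 (size I1).-1)).
split; last split.
- exact: walk_cat wA wBC.
- exact: walk_cat wD wE.
- rewrite (walk_cat_weight x0 wA wBC) (walk_cat_weight x0 wB wC).
  have h1 : weight (sl I1 0 i1) <= weight (sl Rp 0 ia).
    apply: (geo_app (a:=u) (b:=a) gI1) => //; first [exact: walk_nth0 wI1 | slia | idtac].
    by apply: (walk_slx (x0:=x0) wR) => //; first [exact: walk_nth0 wR | slia].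
  have h2 : weight (sl I2 j2 (size I2).-1) <= weight (sl Rp jb (size Rp).-1).
    apply: (geo_app (a:=b) (b:=v) gI2) => //; first [exact: walk_nthl wI2 | slia | idtac].
    by apply: (walk_slx (x0:=x0) wR) => //; first [exact: walk_nthl wR | slia].
  have h3 : (ia <= jb < size Rp)%N by slia.
  move: lR; rewrite (weight_split3 h3) => lR; lra.
- rewrite (walk_cat_weight x0 wD wE).
  have h1 : weight (sl I2 0 z2) <= weight (sl I1 0 z1).
    apply: (geo_app (a:=u) (b:=z) gI2) => //; first [exact: walk_nth0 wI2 | slia | idtac].
    by apply: (walk_slx (x0:=x0) wI1) => //; first [exact: walk_nth0 wI1 | slia].
  have h2 := geo_weight gI1 wI1 wI2.
  move: h2; rewrite (weight_split2 z1s) => h2; lra.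
- move=> y /mem_cat_behead /orP[/mem_sl ->//|/mem_cat_behead /orP[/mem_sl ->|/mem_sl ->]];
  by rewrite ?orbT.
- move=> y /mem_cat_behead /orP[/mem_sl ->|/mem_sl ->]; by rewrite ?orbT.
move=> y yJ1 yJ2.
have key : [\/ (y \in I1) && (index y I1 < z1)%N, (y \in I2) && (z2 < index y I2)%N |
               (y \notin I1) && (y \notin I2)].
  move: yJ1 => /mem_cat_behead /orP[|/mem_cat_behead /orP[]].
  - rewrite mem_sl_uniq //; [idtac | slia ..].
    case/andP=> yI yr; apply: Or31; rewrite yI /=; slia.
  - case/(mem_slP x0); first slia.
    move=> k [kr <-].
    case: (eqVneq k ia) => [ek|kia]; last case: (eqVneq k jb) => [ek|kjb].
    + subst k; rewrite ea; apply: Or31; rewrite aI Ei1 /=; slia.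
    + subst k; rewrite eb; apply: Or32; rewrite bI Ej2 /=; slia.
    + apply: Or33; apply: mid; slia.
  - rewrite mem_sl_uniq //; [idtac | slia ..].
    case/andP=> yI yr; apply: Or32; rewrite yI /=; slia.
have key2 : ((y \in I2) && (index y I2 <= z2)%N) || ((y \in I1) && (z1 <= index y I1)%N).
  move: yJ2 => /mem_cat_behead /orP[].
  - rewrite mem_sl_uniq //; [idtac | slia ..].
    case/andP=> yI yr; rewrite yI /=; apply/orP; left; slia.
  - rewrite mem_sl_uniq //; [idtac | slia ..].
    case/andP=> yI yr; rewrite yI /=; apply/orP; right; slia.
case: key => [/andP[k1 k2]|/andP[k1 k2]|/andP[k1 k2]]; case/orP: key2 => /andP[k3 k4].
- rewrite k1 k3 /=; apply: (neq_idx (s:=I1)); rewrite Ez1; apply/eqP; slia.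
- exfalso; slia.
- exfalso; slia.
- rewrite k1 k3 /=; apply: (neq_idx (s:=I2)); rewrite Ez2; apply/eqP; slia.
- by rewrite k3 in k2.
- by rewrite k3 in k1.
Qed.


Lemma inner x0 I1 I2 Rp u v z :
  walk I1 u v -> uniq I1 -> geo x0 I1 -> walk I2 u v -> uniq I2 -> geo x0 I2 ->
  walk Rp u v -> weight Rp <= weight I1 ->
  z \in I1 -> z \in I2 -> z != u -> z != v -> z \notin Rp ->
  exists J1 J2, good I1 I2 Rp z u v J1 J2.
Proof.
move=> wI1 uI1 gI1 wI2 uI2 gI2 wR lR zI1 zI2 zu zv zR.
have l12 : weight I1 <= weight I2 := geo_weight gI1 wI1 wI2.
have lR2 : weight Rp <= weight I2 := le_trans lR l12.
have [z1 z1s [g1 Ez1]] := idxP x0 zI1.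
have [z2 z2s [g2 Ez2]] := idxP x0 zI2.
pose before y := ((y \in I1) && (index y I1 < z1)%N) || ((y \in I2) && (index y I2 < z2)%N).
pose after y := ((y \in I1) && (z1 < index y I1)%N) || ((y \in I2) && (z2 < index y I2)%N).
have tri1 : forall y, y \in I1 -> y != z -> (index y I1 < z1)%N || (z1 < index y I1)%N.
  move=> y yI yz; rewrite -neq_ltn; apply: contra yz => /eqP h.
  by rewrite -(nth_index x0 yI) h g1.
have tri2 : forall y, y \in I2 -> y != z -> (index y I2 < z2)%N || (z2 < index y I2)%N.
  move=> y yI yz; rewrite -neq_ltn; apply: contra yz => /eqP h.
  by rewrite -(nth_index x0 yI) h g2.
have sR := walk_size wR.
have sI1 := walk_size wI1.
have sI2 := walk_size wI2.
have u1 : index u I1 = 0%N.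
  by rewrite -{1}(walk_nth0 x0 wI1) index_uniq.
have u2 : index u I2 = 0%N.
  by rewrite -{1}(walk_nth0 x0 wI2) index_uniq.
have uI1' : u \in I1 by rewrite -(walk_nth0 x0 wI1) mem_nth.
have vI1 : v \in I1 by rewrite -(walk_nthl x0 wI1) mem_nth //; slia.
have v1 : index v I1 = (size I1).-1.
  by rewrite -{1}(walk_nthl x0 wI1) index_uniq //; slia.
have z1n0 : z1 != 0%N by apply: contra zu => /eqP h; rewrite -g1 h (walk_nth0 x0 wI1).
have z1nl : z1 != (size I1).-1 by apply: contra zv => /eqP h; rewrite -g1 h (walk_nthl x0 wI1).
pose Pa k := (k < size Rp)%N && after (nth x0 Rp k).
have exPa : exists k, Pa k.
  exists (size Rp).-1; rewrite /Pa (walk_nthl x0 wR); apply/andP; split; first slia.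
  by rewrite /after vI1 v1 /=; apply/orP; left; slia.
case: (ex_minnP exPa) => jb /andP[jbs ajb] minjb.
have jb0 : (0 < jb)%N.
  rewrite lt0n; apply/eqP => h; move: ajb; rewrite h (walk_nth0 x0 wR) /after u1 u2.
  by rewrite !ltn0 !andbF.
pose Qb k := (k < jb)%N && before (nth x0 Rp k).
have exQb : exists k, Qb k.
  exists 0%N; rewrite /Qb (walk_nth0 x0 wR) jb0 /before uI1' u1 /=; slia.
have ubQ : forall k, Qb k -> (k <= jb)%N by move=> k /andP[h _]; slia.
case: (ex_maxnP exQb ubQ) => ia /andP[iajb bia] maxia.
have mid : forall k, (ia < k < jb)%N -> (nth x0 Rp k \notin I1) && (nth x0 Rp k \notin I2).
  move=> k hk.
  have nb : ~~ before (nth x0 Rp k).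
    apply/negP => hb; have := maxia k; rewrite /Qb hb andbT => /(_ (ltac:(slia))); slia.
  have na : ~~ after (nth x0 Rp k).
    apply/negP => ha; have := minjb k; rewrite /Pa ha andbT => /(_ (ltac:(slia))); slia.
  have nz : nth x0 Rp k != z.
    by apply: contra zR => /eqP <-; rewrite mem_nth //; slia.
  move: nb na; rewrite /before /after negb_or negb_or !negb_and.
  case/andP=> n1 n2 /andP[n3 n4].
  apply/andP; split.
    apply/negP => h; move: n1 n3 (tri1 _ h nz); rewrite h /=; slia.
  apply/negP => h; move: n2 n4 (tri2 _ h nz); rewrite h /=; slia.
have hk : (ia < jb < size Rp)%N by slia.
move: bia ajb; rewrite /before /after.
case/orP=> /andP[aI ai]; case/orP=> /andP[bI bi].
- apply: (inner_same (x0:=x0) (ia:=ia) (jb:=jb) wI1 uI1 gI1 wI2 wR lR hk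
     (erefl _) (erefl _) aI); rewrite ?Ez1 //.
  by move=> k /mid /andP[].
- apply: (inner_cross (x0:=x0) (ia:=ia) (jb:=jb) wI1 uI1 gI1 wI2 uI2 gI2 wR lR zI1 zI2 hk
     (erefl _) (erefl _) aI); rewrite ?Ez1 ?Ez2 //.
- have [J1 [J2 g]] : exists J1 J2, good I2 I1 Rp z u v J1 J2.
    apply: (inner_cross (x0:=x0) (ia:=ia) (jb:=jb) wI2 uI2 gI2 wI1 uI1 gI1 wR lR2 zI2 zI1 hk
      (erefl _) (erefl _) aI); rewrite ?Ez1 ?Ez2 //.
    by move=> k /mid; rewrite andbC.
  by exists J2, J1; apply: good_sym.
- have [J1 [J2 g]] : exists J1 J2, good I2 I1 Rp z u v J1 J2.
    apply: (inner_same (x0:=x0) (ia:=ia) (jb:=jb) wI2 uI2 gI2 wI1 wR lR2 hk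
     (erefl _) (erefl _) aI); rewrite ?Ez2 //.
    by move=> k /mid /andP[].
  by exists J2, J1; apply: good_sym.
Qed.


Lemma idx_eq (s : seq V) y z : y \in s -> (index y s == index z s) = (y == z).
Proof.
move=> ys; apply/eqP/eqP => [h|->//].
have zs : z \in s by rewrite -index_mem -h index_mem.
by rewrite -(nth_index y ys) h nth_index.
Qed.

Lemma in_window x0 P s t iu iv S y : shortest e w P s t -> (iu <= iv < size P)%N ->
  walk S (nth x0 P iu) (nth x0 P iv) -> weight S <= weight (sl P iu iv) ->
  y \in S -> y \in P -> (iu <= index y P <= iv)%N.
Proof.
move=> sP h wS lS yS yP.
have [iy iys [ey Ey]] := idxP x0 yP.
rewrite Ey.
case: (ltnP iy iu) => [h1|h1].
  by exfalso; apply: (X_left sP h1 h wS _ lS); rewrite ey.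
case: (ltnP iv iy) => [h2|h2].
  exfalso; apply: (X_right (iy:=iy) sP _ _ wS _ lS); try slia; by rewrite ey.
by apply/andP.
Qed.

Lemma sub_facts x0 P s t u v : shortest e w P s t -> precedes P u v ->
  exists iu iv, [/\ (iu <= iv < size P)%N, nth x0 P iu = u, nth x0 P iv = v,
    index u P = iu & index v P = iv] /\
    [/\ subpath P u v = sl P iu iv, walk (sl P iu iv) u v, uniq (sl P iu iv)
      & geo x0 (sl P iu iv)].
Proof.
move=> sP /and3P[uP vP le].
have [pP _] := sP; have [wP uqP] := is_path_walk pP.
have [iu ius [eu Eu]] := idxP x0 uP.
have [iv ivs [ev Ev]] := idxP x0 vP.
rewrite Eu Ev in le.
have h : (iu <= iv < size P)%N by slia.
exists iu, iv; split; split => //.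
- by rewrite subpathE Eu Ev.
- exact: (walk_slx wP h eu ev).
- exact: uniq_sl.
- exact: (geo_sl (shortest_geo (x0:=x0) sP) h).
Qed.

Lemma shortest_ends x0 P s t : shortest e w P s t ->
  [/\ nth x0 P 0 = s, nth x0 P (size P).-1 = t, index s P = 0%N,
      index t P = (size P).-1 & (0 < size P)%N].
Proof.
case=> pP _; have [wP uP] := is_path_walk pP.
have s0 := walk_size wP.
split.
- exact: walk_nth0 wP.
- exact: walk_nthl wP.
- by rewrite -(walk_nth0 x0 wP) index_uniq.
- by rewrite -(walk_nthl x0 wP) index_uniq //; slia.
- exact: s0.
Qed.

Lemma replace_mid x0 P s t iu iv J u v : shortest e w P s t -> (iu <= iv < size P)%N ->
  nth x0 P iu = u -> nth x0 P iv = v -> walk J u v -> weight J <= weight (sl P iu iv) ->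
  exists Q, shortest e w Q s t /\
    forall y, y \in Q -> ((y \in P) && ((index y P <= iu)%N || (iv <= index y P)%N)) || (y \in J).
Proof.
move=> sP h eu ev wJ lJ.
have [pP minP] := sP; have [wP uP] := is_path_walk pP.
have [e0 el _ _ s0] := shortest_ends x0 sP.
have wA : walk (sl P 0 iu) s u by apply: (walk_slx (x0:=x0) wP) => //; slia.
have wC : walk (sl P iv (size P).-1) v t by apply: (walk_slx (x0:=x0) wP) => //; slia.
have wJC := walk_cat wJ wC.
have wQ := walk_cat wA wJC.
have [q [wq uq sq lq]] := reduce_walk (leqnn _) wQ.
exists q; split.
  split; first by rewrite is_pathE wq uq.
  move=> q' pq'; apply: le_trans (minP q' pq'); apply: le_trans lq _.
  rewrite (walk_cat_weight x0 wA wJC) (walk_cat_weight x0 wJ wC) (weight_split3 h); lra.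
move=> y /sq /mem_cat_behead /orP[|/mem_cat_behead /orP[]].
- rewrite mem_sl_uniq //; [idtac | slia ..].
  by case/andP=> -> hy; apply/orP; left; apply/orP; left; slia.
- by move=> ->; rewrite orbT.
- rewrite mem_sl_uniq //; [idtac | slia ..].
  by case/andP=> -> hy; apply/orP; left; apply/orP; right; slia.
Qed.

Lemma main_contra s1 t1 s2 t2 P1 P2 u v z Rp :
  shortest e w P1 s1 t1 -> shortest e w P2 s2 t2 ->
  (forall Q1 Q2, shortest e w Q1 s1 t1 -> shortest e w Q2 s2 t2 ->
     (n_internal_common P1 P2 s1 t1 s2 t2 <= n_internal_common Q1 Q2 s1 t1 s2 t2)%N) ->
  precedes P1 u v -> precedes P2 u v ->
  z \in subpath P1 u v -> z \in subpath P2 u v -> z != u -> z != v ->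
  is_path e Rp u v -> z \notin Rp -> weight Rp <= weight (subpath P1 u v) -> False.
Proof.
move=> sP1 sP2 minimal pr1 pr2 zS1 zS2 zu zv pR zR lR.
pose x0 := u.
have [iu1 [iv1 [[h1 eu1 ev1 Eu1 Ev1] [E1 wI1 uI1 gI1]]]] := sub_facts x0 sP1 pr1.
have [iu2 [iv2 [[h2 eu2 ev2 Eu2 Ev2] [E2 wI2 uI2 gI2]]]] := sub_facts x0 sP2 pr2.
rewrite E1 in zS1 lR; rewrite E2 in zS2.
have [wR uR] := is_path_walk pR.
have l12 := geo_weight gI1 wI1 wI2.
have l21 := geo_weight gI2 wI2 wI1.
have zI1 := zS1; have zI2 := zS2.
have [J1 [J2 [wJ1 wJ2 lJ1 lJ2 [sub1 sub2 inter]]]] :=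
  inner wI1 uI1 gI1 wI2 uI2 gI2 wR lR zI1 zI2 zu zv zR.
have [Q1 [sQ1 mQ1]] := replace_mid sP1 h1 eu1 ev1 wJ1 lJ1.
have [Q2 [sQ2 mQ2]] := replace_mid sP2 h2 eu2 ev2 wJ2 lJ2.
have [uP1 vP1 _] := and3P pr1.
have [uP2 vP2 _] := and3P pr2.
have [pP1 _] := sP1; have [wP1 uqP1] := is_path_walk pP1.
have [pP2 _] := sP2; have [wP2 uqP2] := is_path_walk pP2.
have /andP[zP1 zr1] : (z \in P1) && (iu1 <= index z P1 <= iv1)%N by rewrite -mem_sl_uniq.
have /andP[zP2 zr2] : (z \in P2) && (iu2 <= index z P2 <= iv2)%N by rewrite -mem_sl_uniq.
have zn1 : (index z P1 != iu1) && (index z P1 != iv1) by rewrite -Eu1 -Ev1 !idx_eq // zu zv.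
have zn2 : (index z P2 != iu2) && (index z P2 != iv2) by rewrite -Eu2 -Ev2 !idx_eq // zu zv.
have lR2 := le_trans lR l12.
have win1 : forall y, [|| y \in sl P1 iu1 iv1, y \in sl P2 iu2 iv2 | y \in Rp] -> y \in P1 ->
    (iu1 <= index y P1 <= iv1)%N.
  move=> y /or3P[h|h|h] yP; apply: (in_window (x0:=x0) sP1 h1 _ _ h yP); rewrite ?eu1 ?ev1 //;
  exact: lexx.
have win2 : forall y, [|| y \in sl P1 iu1 iv1, y \in sl P2 iu2 iv2 | y \in Rp] -> y \in P2 ->
    (iu2 <= index y P2 <= iv2)%N.
  move=> y /or3P[h|h|h] yP; apply: (in_window (x0:=x0) sP2 h2 _ _ h yP); rewrite ?eu2 ?ev2 //;
  exact: lexx.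
have uv1 : forall y, y \in P1 -> (iu1 <= index y P1 <= iv1)%N ->
    ((index y P1 <= iu1) || (iv1 <= index y P1))%N -> (y == u) || (y == v).
  move=> y yP r o; have : (index y P1 == iu1) || (index y P1 == iv1) by slia.
  by rewrite -Eu1 -Ev1 !idx_eq.
have uv2 : forall y, y \in P2 -> (iu2 <= index y P2 <= iv2)%N ->
    ((index y P2 <= iu2) || (iv2 <= index y P2))%N -> (y == u) || (y == v).
  move=> y yP r o; have : (index y P2 == iu2) || (index y P2 == iv2) by slia.
  by rewrite -Eu2 -Ev2 !idx_eq.
have core : forall y, y \in Q1 -> y \in Q2 -> [&& y \in P1, y \in P2 & y != z].
  move=> y /mQ1 /orP[/andP[yP1 o1]|yJ1] /mQ2 /orP[/andP[yP2 o2]|yJ2].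
  - rewrite yP1 yP2 /=; apply/eqP => Ey; move: o1; rewrite Ey; slia.
  - rewrite yP1 /=; apply/andP; split; last by apply/eqP => Ey; move: o1; rewrite Ey; slia.
    by case/orP: (uv1 y yP1 (win1 y (sub2 y yJ2) yP1) o1) => /eqP ->.
  - rewrite yP2 /=; apply/andP; split; last by apply/eqP => Ey; move: o2; rewrite Ey; slia.
    by case/orP: (uv2 y yP2 (win2 y (sub1 y yJ1) yP2) o2) => /eqP ->.
  - case/and3P: (inter y yJ1 yJ2) => /mem_sl -> /mem_sl -> ->; by [].
have [e01 el1 i01 il1 s01] := shortest_ends x0 sP1.
have := minimal Q1 Q2 sQ1 sQ2.
rewrite leqNgt => /negP; apply.
rewrite /n_internal_common; apply: proper_card; apply/properP; split.
  apply/subsetP => y; rewrite !inE => /and3P[a b c].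
  by case/and3P: (core y a b) => -> -> _.
exists z.
  have zs1 : z != s1 by rewrite -(idx_eq (s:=P1)) // i01; slia.
  have zt1 : z != t1 by rewrite -(idx_eq (s:=P1)) // il1; slia.
  by rewrite !inE zP1 zP2 (negbTE zs1) (negbTE zt1).
rewrite inE; apply/negP => /and3P[a b _].
by have := core z a b; rewrite eqxx !andbF.
Qed.

End Aux.

Unset Implicit Arguments.

Theorem lemma5 (R : realType) (V : finType) (e : rel V) (w : V -> V -> R)
  (s1 t1 s2 t2 : V) (P1 P2 : seq V) (u v : V) :
  no_nonpos_cycle e w ->
  (exists p, is_path e p s1 t1) ->
  (exists p, is_path e p s2 t2) ->
  shortest e w P1 s1 t1 ->
  shortest e w P2 s2 t2 ->
  (forall Q1 Q2, shortest e w Q1 s1 t1 -> shortest e w Q2 s2 t2 ->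
     (n_internal_common P1 P2 s1 t1 s2 t2 <= n_internal_common Q1 Q2 s1 t1 s2 t2)%N) ->
  concordant P1 s1 t1 P2 s2 t2 u v ->
  #|[set z | (z \in subpath P1 u v) && (z \in subpath P2 u v)]| = delta e w u v /\
  (forall z, (z \in subpath P1 u v) && (z \in subpath P2 u v) <->
             dist_critical e w u v z).
Proof.
move=> hcyc _ _ sP1 sP2 minimal [_ [pr1 [pr2 _]]].
have [iu1 [iv1 [[h1 eu1 ev1 Eu1 Ev1] [E1 wI1 uI1 gI1]]]] := sub_facts hcyc u sP1 pr1.
have [iu2 [iv2 [[h2 eu2 ev2 Eu2 Ev2] [E2 wI2 uI2 gI2]]]] := sub_facts hcyc u sP2 pr2.
have [pP1 _] := sP1; have [wP1 uqP1] := is_path_walk pP1.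
have [pP2 _] := sP2; have [wP2 uqP2] := is_path_walk pP2.
have m1 : forall k, (iu1 <= k <= iv1)%N -> nth u P1 k \in sl P1 iu1 iv1.
  move=> k hk; apply/(mem_slP u _ h1); exists k; split=> //.
have m2 : forall k, (iu2 <= k <= iv2)%N -> nth u P2 k \in sl P2 iu2 iv2.
  move=> k hk; apply/(mem_slP u _ h2); exists k; split=> //.
have key : forall z, (z \in subpath P1 u v) && (z \in subpath P2 u v) <->
             dist_critical e w u v z.
  move=> z; split.
  - case/andP=> z1 z2.
    case: (eqVneq z u) => [->|zu]; first by left.
    case: (eqVneq z v) => [->|zv]; first by right; left.
    right; right; exists (subpath P1 u v); split.
      split; first by rewrite E1 is_pathE wI1 uI1.
      move=> q pq; rewrite E1; have [wq _] := is_path_walk pq.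
      exact: geo_weight gI1 wI1 wq.
    move=> p pp zp; rewrite ltNge; apply/negP => hle.
    exact: (main_contra hcyc sP1 sP2 minimal pr1 pr2 z1 z2 zu zv pp zp hle).
  - rewrite E1 E2.
    case=> [->|[->|[q [[pq minq] hq]]]].
    + apply/andP; split; [rewrite -{1}eu1; apply: m1 | rewrite -{1}eu2; apply: m2]; slia.
    + apply/andP; split; [rewrite -{1}ev1; apply: m1 | rewrite -{1}ev2; apply: m2]; slia.
    + have [wq _] := is_path_walk pq.
      apply/andP; split; apply/negPn/negP => nz.
        have := hq (sl P1 iu1 iv1) (ltac:(by rewrite is_pathE wI1 uI1)) nz.
        by rewrite ltNge (geo_weight gI1 wI1 wq).
      have := hq (sl P2 iu2 iv2) (ltac:(by rewrite is_pathE wI2 uI2)) nz.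
      by rewrite ltNge (geo_weight gI2 wI2 wq).
split=> //.
rewrite /delta; apply: eq_card => z; rewrite !inE.
apply/idP/asboolP; by move/key.
Qed.
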